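(* Let $G$ be a finite group, let $T$ be a $G$-Tambara functor, and let $k$ be an integer (viewed as an element of each ring $T(G/H)$ via the unique ring homomorphism $\mathbb{Z} \to T(G/H)$). The following are equivalent: (1) $k$ is a unit in $T(G/G)$; (2) $k$ is a unit in $T(G/H)$ for every subgroup $H \leq G$; (3) $k$ is a unit in $T(G/e)$, where $e$ is the trivial subgroup.
   Context: For a finite group $G$, a $G$-Tambara functor $T$ (in the sense of Tambara) consists of a commutative ring $T(G/H)$ for each subgroup $H \leq G$, together with, for each inclusion $H \leq K$ of subgroups, a ring homomorphism $\mathrm{res}^K_H : T(G/K) \to T(G/H)$ (restriction), an additive group homomorphism $\mathrm{tr}^K_H : T(G/H) \to T(G/K)$ (transfer), and a multiplicative monoid homomorphism $\mathrm{nm}^K_H : T(G/H) \to T(G/K)$ (norm), and, for each $g \in G$ and $H \leq G$, a ring isomorphism $c_{g,H} : T(G/H) \to T(G/gHg^{-1})$ (conjugation), satisfying the standard Tambara functor axioms (equivalently, $T$ is a product-preserving functor from Tambara's category of bispans of finite $G$-sets to sets, with $T(G/H)$ its value on the orbit $G/H$). *)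

(* Defs.v *)
From HB Require Import structures.
From mathcomp Require Import all_boot all_order all_algebra all_fingroup.
Set Implicit Arguments. Unset Strict Implicit. Unset Printing Implicit Defensive.
Import GRing.Theory.
Local Open Scope ring_scope.

Section Tambara.
Variable gT : finGroupType.
(* The finite group G is the whole type gT, G = [set: gT];
   its subgroups are the {group gT}. *)

(* cj H g = g H g^-1   (MathComp's H :^ x is x^-1 H x) *)
Definition cj (H : {group gT}) (g : gT) : {group gT} := (H :^ g^-1)%G.
Definition meet (J H : {group gT}) : {group gT} := (J :&: H)%G.

Definition dcoset (J H : {set gT}) (g : gT) : {set gT} := (J :* g * H)%g.
Definition dreps (J H K R : {set gT}) : Prop :=
  R \subset K /\
  forall x, x \in K -> #|[set g in R | x \in dcoset J H g]| = 1%N.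

(* stabiliser in K of a subset S of gT under left translation
   (generated group of the stabiliser set, which is already a group) *)
Definition stab (K : {group gT}) (S : {set gT}) : {group gT} :=
  <<[set k in K | lcoset S k == S]>>%G.

Definition orbit_reps (K : {group gT}) (P : {set gT} -> Prop)
    (F : {set {set gT}}) : Prop :=
  (forall S, S \in F -> P S) /\
  forall S', P S' -> #|[set S in F | [exists k in K, S' == lcoset S k]]| = 1%N.

(* subsets S of K that are unions of left H-cosets: functions K/H -> bool
   (gH |-> (g \in S)) *)
Definition subsetKH (H K : {group gT}) (S : {set gT}) : Prop :=
  S \subset K /\ (S * H \subset S)%g.

(* subsets S of K encoding sections s : K/H -> K/L of the projection K/L -> K/H
   (for L <= H <= K): S is the union of the cosets s(kH) *)
Definition sectionKHL (L H K : {group gT}) (S : {set gT}) : Prop :=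
  S \subset K /\ (S * L \subset S)%g /\
  forall k, k \in K -> exists x, S :&: lcoset H k = lcoset L x.

(* an element g' with s(gH) = g' L *)
Definition secpt (H : {group gT}) (S : {set gT}) (g : gT) : gT :=
  odflt g [pick x in S :&: lcoset H g].

Definition ring_hom (R S : pzRingType) (f : R -> S) : Prop :=
  f 1 = 1 /\ (forall x y, f (x + y) = f x + f y) /\
  (forall x y, f (x * y) = f x * f y).

Record tambara_data := TambaraData {
  TT : {group gT} -> comPzRingType;           (* H |-> T(G/H) *)
  res : forall H K : {group gT}, TT K -> TT H;  (* res^K_H  (meaningful for H <= K) *)
  tr  : forall H K : {group gT}, TT H -> TT K;
  nm  : forall H K : {group gT}, TT H -> TT K;
  conj : forall (g : gT) (H K : {group gT}), TT H -> TT K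
    (* c_{g,H} : T(G/H) -> T(G/gHg^-1)  (meaningful for K = g H g^-1) *)
}.
Arguments res : clear implicits.
Arguments tr : clear implicits.
Arguments nm : clear implicits.
Arguments conj : clear implicits.

Record tambara_axioms (T : tambara_data) : Prop := TambaraAxioms {
  res_id : forall H (x : TT T H), res T H H x = x;
  tr_id : forall H (x : TT T H), tr T H H x = x;
  nm_id : forall H (x : TT T H), nm T H H x = x;
  res_comp : forall (J H K : {group gT}) (x : TT T K), J \subset H -> H \subset K ->
    res T J H (res T H K x) = res T J K x;
  tr_comp : forall (J H K : {group gT}) (x : TT T J), J \subset H -> H \subset K ->
    tr T H K (tr T J H x) = tr T J K x;
  nm_comp : forall (J H K : {group gT}) (x : TT T J), J \subset H -> H \subset K ->
    nm T H K (nm T J H x) = nm T J K x;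
  conj_inner : forall (H : {group gT}) g (x : TT T H), g \in H -> conj T g H H x = x;
  conj_comp : forall g h (H K M : {group gT}) (x : TT T H),
    K = cj H h -> M = cj K g ->
    conj T g K M (conj T h H K x) = conj T (g * h)%g H M x;
  conj_ring : forall g (H K : {group gT}), K = cj H g -> ring_hom (conj T g H K);
  res_ring : forall (H K : {group gT}), H \subset K -> ring_hom (res T H K);
  tr_add : forall (H K : {group gT}) (x y : TT T H), H \subset K ->
    tr T H K (x + y) = tr T H K x + tr T H K y;
  nm_one : forall (H K : {group gT}), H \subset K -> nm T H K 1 = 1;
  nm_mul : forall (H K : {group gT}) (x y : TT T H), H \subset K ->
    nm T H K (x * y) = nm T H K x * nm T H K y;
  nm_zero : forall (H K : {group gT}), H \subset K -> nm T H K 0 = 0;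
  conj_res : forall g (J H J' H' : {group gT}) (x : TT T H), J \subset H ->
    H' = cj H g -> J' = cj J g ->
    conj T g J J' (res T J H x) = res T J' H' (conj T g H H' x);
  conj_tr : forall g (J H J' H' : {group gT}) (x : TT T J), J \subset H ->
    H' = cj H g -> J' = cj J g ->
    conj T g H H' (tr T J H x) = tr T J' H' (conj T g J J' x);
  conj_nm : forall g (J H J' H' : {group gT}) (x : TT T J), J \subset H ->
    H' = cj H g -> J' = cj J g ->
    conj T g H H' (nm T J H x) = nm T J' H' (conj T g J J' x);
  mackey_tr : forall (J H K : {group gT}) (R : {set gT}) (x : TT T H),
    J \subset K -> H \subset K -> dreps J H K R ->
    res T J K (tr T H K x) =
    \sum_(g in R) tr T (meet J (cj H g)) J
        (res T (meet J (cj H g)) (cj H g) (conj T g H (cj H g) x));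
  mackey_nm : forall (J H K : {group gT}) (R : {set gT}) (x : TT T H),
    J \subset K -> H \subset K -> dreps J H K R ->
    res T J K (nm T H K x) =
    \prod_(g in R) nm T (meet J (cj H g)) J
        (res T (meet J (cj H g)) (cj H g) (conj T g H (cj H g) x));
  frobenius : forall (H K : {group gT}) (a : TT T H) (b : TT T K), H \subset K ->
    tr T H K a * b = tr T H K (a * res T H K b);
  nm_add : forall (H K : {group gT}) (a b : TT T H)
      (F : {set {set gT}}) (R : {set gT} -> {set gT}),
    H \subset K -> orbit_reps K (subsetKH H K) F ->
    (forall S, S \in F -> dreps (stab K S) H K (R S)) ->
    nm T H K (a + b) =
    \sum_(S in F) tr T (stab K S) K
      (\prod_(g in R S) nm T (meet (stab K S) (cj H g)) (stab K S)
         (res T (meet (stab K S) (cj H g)) (cj H g)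
            (conj T g H (cj H g) (if g \in S then b else a))));
  nm_tr : forall (L H K : {group gT}) (a : TT T L)
      (F : {set {set gT}}) (R : {set gT} -> {set gT}),
    L \subset H -> H \subset K -> orbit_reps K (sectionKHL L H K) F ->
    (forall S, S \in F -> dreps (stab K S) H K (R S)) ->
    nm T H K (tr T L H a) =
    \sum_(S in F) tr T (stab K S) K
      (\prod_(g in R S) nm T (meet (stab K S) (cj H g)) (stab K S)
         (res T (meet (stab K S) (cj H g)) (cj L (secpt H S g))
            (conj T (secpt H S g) L (cj L (secpt H S g)) a)))
}.

Record tambara := Tambara {
  tdata :> tambara_data;
  taxioms : tambara_axioms tdata
}.

End Tambara.

Definition is_unit (R : pzRingType) (x : R) : Prop := exists y : R, (x * y = 1)%R.

(* Main.v *)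
From Pilot Require Import Defs.
From mathcomp Require Import all_boot all_order all_algebra all_fingroup.
Set Implicit Arguments. Unset Strict Implicit. Unset Printing Implicit Defensive.
Import GRing.Theory.

Section Reps.
Variable T : finType.
Variable P : pred T.
Variable r : rel T.
Hypothesis rrefl : forall x, P x -> r x x.
Hypothesis rsym : forall x y, P x -> P y -> r x y -> r y x.
Hypothesis rtrans : forall x y z, P x -> P y -> P z -> r x y -> r y z -> r x z.

Definition pk (x : T) : T := odflt x [pick z | P z && r x z].

Lemma pkP x : P x -> P (pk x) && r x (pk x).
Proof.
move=> Px; rewrite /pk; case: pickP => [z //|/(_ x)]; by rewrite Px rrefl.
Qed.

Lemma pk_eq x y : P x -> P y -> r x y -> pk x = pk y.
Proof.
move=> Px Py rxy; rewrite /pk (@eq_pick _ _ [pred z | P z && r y z]); last first.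
  move=> z /=.
case Pz: (P z) => //=; apply/idP/idP => h.
- exact: rtrans (rsym Px Py rxy) h.
- exact: rtrans rxy h.
case: pickP => [//|/(_ y)] /=; by rewrite Py rrefl.
Qed.

Definition reps : {set T} := [set pk x | x in P].

Lemma reps_spec : (forall x, x \in reps -> P x) /\
  (forall y, P y -> #|[set x in reps | r y x]| = 1%N).
Proof.
split.
  by move=> x /imsetP [x' Px' ->]; case/andP: (pkP Px').
move=> y Py; rewrite -(cards1 (pk y)); congr (#|pred_of_set _|); apply/setP => x.
rewrite !inE; apply/andP/eqP.
  case=> /imsetP [x' Px' ->] ryx.
  case/andP: (pkP Px') => P1 r1.
  apply: pk_eq => //; exact: (rtrans Px' P1 Py r1 (rsym Py P1 ryx)).
move=> ->; split; first by apply/imsetP; exists y.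
by case/andP: (pkP Py).
Qed.
End Reps.

Section G.
Variable gT : finGroupType.
Implicit Types J H K : {group gT}.

Lemma dcosetP J H g x : reflect (exists j, exists h, [/\ j \in J, h \in H & x = j * g * h])%g
   (x \in dcoset J H g).
Proof.
apply: (iffP idP).
  case/mulsgP => y z /rcosetP [j Jj ->] Hz ->; by exists j, z.
case=> j [h [Jj Hh ->]]; apply: mem_mulg => //; apply/rcosetP; by exists j.
Qed.

Definition Rf J H K := reps (mem K) (fun x g => x \in dcoset J H g).

Lemma dreps_Rf J H K : dreps J H K (Rf J H K).
Proof.
pose r := fun x g => x \in dcoset J H g.
have e1 : forall x, x \in K -> r x x.
  move=> x _; apply/dcosetP; exists 1%g, 1%g; by rewrite !group1 mul1g mulg1.
have e2 : forall x y, x \in K -> y \in K -> r x y -> r y x.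
  move=> x y _ _ /dcosetP [j [h [Jj Hh ->]]]; apply/dcosetP.
  exists j^-1%g, h^-1%g; rewrite !groupV; split => //.
  by rewrite !mulgA mulVg mul1g -mulgA mulgV mulg1.
have e3 : forall x y z, x \in K -> y \in K -> z \in K -> r x y -> r y z -> r x z.
  move=> x y z _ _ _ /dcosetP [j [h [Jj Hh ->]]] /dcosetP [j' [h' [Jj' Hh' ->]]].
  apply/dcosetP; exists (j * j')%g, (h' * h)%g; rewrite !groupM //; split => //.
  by rewrite !mulgA.
have [h1 h2] := @reps_spec gT (mem K) r e1 e2 e3.
split; last exact: h2.
by apply/subsetP => x /h1.
Qed.
End G.
Section G2.
Variable gT : finGroupType.
Implicit Types J H K : {group gT}.
Implicit Types S : {set gT}.

Lemma orbit_reps_exists H K : exists F, orbit_reps K (subsetKH H K) F.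
Proof.
pose Pb := fun S : {set gT} => (S \subset K) && (S * H \subset S)%g.
pose r := fun S' S : {set gT} => [exists k in K, S' == lcoset S k].
have e1 : forall x, Pb x -> r x x.
  move=> x _; apply/existsP; exists 1%g; by rewrite group1 lcosetE lcoset1 eqxx.
have e2 : forall x y, Pb x -> Pb y -> r x y -> r y x.
  move=> x y _ _ /existsP [k /andP [Kk /eqP ->]]; apply/existsP; exists k^-1%g.
  by rewrite groupV Kk !lcosetE -lcosetM mulVg lcoset1 eqxx.
have e3 : forall x y z, Pb x -> Pb y -> Pb z -> r x y -> r y z -> r x z.
  move=> x y z _ _ _ /existsP [k /andP [Kk /eqP ->]] /existsP [k' /andP [Kk' /eqP ->]].
  apply/existsP; exists (k * k')%g; by rewrite groupM // !lcosetE lcosetM eqxx.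
have [h1 h2] := @reps_spec _ Pb r e1 e2 e3.
exists (reps Pb r); split.
  by move=> S /h1 /andP.
by move=> S' [a b]; apply: h2; apply/andP.
Qed.

Lemma stab_sub K S : stab K S \subset K.
Proof. by rewrite gen_subG; apply/subsetP => x; rewrite inE => /andP []. Qed.

Lemma stab_full K S : [set k in K | lcoset S k == S] = K -> stab K S = K.
Proof. by move=> E; apply: val_inj => /=; rewrite E genGid. Qed.

Lemma stab0 K : stab K set0 = K.
Proof.
apply: stab_full; apply/setP => x; rewrite inE.
case: (x \in K) => //=; apply/eqP/setP => y; rewrite lcosetE mem_lcoset.
by rewrite !inE.
Qed.

Lemma stabK K : stab K K = K.
Proof.
apply: stab_full; apply/setP => x; rewrite inE.
by case Kx: (x \in K) => //=; rewrite lcosetE lcoset_id // eqxx.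
Qed.

Lemma stab_proper K S : S \subset K -> S != set0 -> S != K ->
  #|stab K S| < #|K|.
Proof.
move=> SK S0 SnK; apply: proper_card; rewrite properE stab_sub /=.
apply/negP => Kst.
pose B := [set k | lcoset S k == S].
have gB : group_set B.
  apply/group_setP; split; first by rewrite inE lcosetE lcoset1.
  move=> x y; rewrite !inE !lcosetE => /eqP ex /eqP ey; by rewrite lcosetM ey ex.
have sB : stab K S \subset (Group gB).
  rewrite gen_subG; apply/subsetP => x; rewrite !inE => /andP [].
  by [].
have [s Ss] : exists s, s \in S.
  case: (set_0Vmem S) => [E|[s Ss]]; [by rewrite E eqxx in S0 | by exists s].
case/negP: SnK; rewrite eqEsubset SK /=; apply/subsetP => x Kx.
have xs : (x * s^-1)%g \in B.
  apply: (subsetP sB); apply: (subsetP Kst); rewrite groupM // groupV.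
  exact: (subsetP SK).
rewrite inE lcosetE in xs; rewrite -(eqP xs).
by rewrite mem_lcoset invMg invgK -mulgA mulVg mulg1.
Qed.
End G2.
Local Open Scope ring_scope.

Lemma rh0 (R S : pzRingType) (f : R -> S) : ring_hom f -> f 0 = 0.
Proof.
case=> _ [hA _]; have := hA 0 0; rewrite addr0 => e.
by rewrite -(addrK (f 0) (f 0)) -e subrr.
Qed.

Lemma rh_nat (R S : pzRingType) (f : R -> S) n : ring_hom f -> f n%:R = n%:R.
Proof.
move=> h; elim: n => [|n IH]; first exact: rh0.
case: h => h1 [hA _]; by rewrite !mulrS hA h1 IH.
Qed.

Lemma rhN (R S : pzRingType) (f : R -> S) x : ring_hom f -> f (- x) = - f x.
Proof.
move=> h; have := h => -[_ [hA _]]; apply/eqP; rewrite -subr_eq0 opprK -hA addNr.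
by rewrite (rh0 h).
Qed.

Lemma rh_int (R S : pzRingType) (f : R -> S) k : ring_hom f -> f k%:~R = k%:~R.
Proof.
move=> h; case: k => n; first by rewrite /= rh_nat.
by rewrite NegzE !mulrNz rhN // rh_nat.
Qed.

Lemma rh_unit (R S : pzRingType) (f : R -> S) x : ring_hom f -> is_unit x -> is_unit (f x).
Proof. by case=> h1 [_ hM] [y xy]; exists (f y); rewrite -hM xy h1. Qed.

Section Main.
Variable gT : finGroupType.
Variable T : tambara gT.
Let A := taxioms T.
Local Notation trT H K := (@Pilot.Defs.tr gT T H K).
Local Notation resT H K := (@Pilot.Defs.res gT T H K).
Local Notation nmT H K := (@Pilot.Defs.nm gT T H K).
Local Notation conjT g H K := (@Pilot.Defs.conj gT T g H K).

Lemma meet_cj1 (X : {group gT}) g : meet X (cj 1%G g) = 1%G.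
Proof. by apply: val_inj => /=; rewrite conjs1g setIg1. Qed.

Lemma nm_nat_eq (X Y Z : {group gT}) k : X = Y -> nmT X Z k%:R = nmT Y Z k%:R.
Proof. by move=> ->. Qed.

Lemma dreps_card1 (K : {group gT}) R : dreps K 1%G K R -> #|R| = 1%N.
Proof.
case=> RK /(_ 1%g (group1 K)); congr (_ = _); congr (#|pred_of_set _|).
apply/setP => g; rewrite inE; case gR: (g \in R) => //=; apply/dcosetP.
exists g^-1%g, 1%g; rewrite group1 groupV (subsetP RK) //; split => //.
by rewrite mulVg mulg1.
Qed.

Lemma main_nat (n : nat) : is_unit (n%:R : TT T 1%G) ->
  forall N (K : {group gT}), (#|K| < N)%N -> is_unit (n%:R : TT T K).
Proof.
move=> [v nv] N; elim: N => [//|N IHN] K KN.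
have IH : forall L : {group gT}, (#|L| < #|K|)%N -> is_unit (n%:R : TT T L).
  move=> L LK; apply: IHN; exact: leq_trans LK KN.
pose div (x : TT T K) := exists y, x = n%:R * y.
have div0 : div 0 by exists 0; rewrite mulr0.
have divD : forall x y, div x -> div y -> div (x + y).
  by move=> x y [a ->] [b ->]; exists (a + b); rewrite mulrDr.
have trdiv : forall (L : {group gT}) c, L \subset K -> (#|L| < #|K|)%N -> div (trT L K c).
  move=> L c LK /IH [w nw]; exists (trT L K (c * w)).
  rewrite mulrC (frobenius A) // (rh_nat _ (res_ring A LK)) -mulrA (mulrC w) nw mulr1 //.
have K0 : (K : {set gT}) != set0 by apply/set0Pn; exists 1%g.
have step : forall m, exists y, nmT 1%G K m%:R = m%:R + n%:R * y.
  elim=> [|m [y IHm]].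
    by exists 0; rewrite !mulr0n mulr0 addr0 (nm_zero A (sub1G K)).
  have [F hF] := orbit_reps_exists 1%G K.
  pose R := fun S => Rf (stab K S) 1%G K.
  have hR : forall S, S \in F -> dreps (stab K S) 1%G K (R S) := fun S _ => dreps_Rf _ _ _.
  have Fmem : forall S', subsetKH 1%G K S' ->
      exists S0, [/\ S0 \in F, S0 \subset K & #|S0| = #|S'| ].
    move=> S' PS'; case: hF => h1 h2; have /eqP/cards1P [S0 E] := h2 S' PS'.
    have : S0 \in [set S in F | [exists k in K, S' == lcoset S k]] by rewrite E set11.
    rewrite inE => /andP [FS0 /existsP [k /andP [Kk /eqP e]]].
    exists S0; split => //; first by case: (h1 _ FS0).
    by rewrite e lcosetE card_lcoset.
  have F0 : set0 \in F.
    have [|S0 [FS0 _ c0]] := Fmem set0.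
      by split; [apply: sub0set | rewrite mul0g subxx].
    by rewrite cards0 in c0; rewrite -(cards0_eq c0).
  have FK : (K : {set gT}) \in F.
    have [|S0 [FS0 SK c0]] := Fmem K.
      by split; [apply: subxx | rewrite mulg1 subxx].
    suff <- : S0 = K by [].
    by apply/eqP; rewrite eqEcard SK c0 leqnn.
  rewrite mulrSr (nm_add A (m%:R) 1 (sub1G K) hF hR).
  rewrite (bigD1 set0) //= (bigD1 (K : {set gT})) /=; last by rewrite FK K0.
  set rest := \sum_(i | _) _.
  have [z ez] : div rest.
    apply: big_ind => // S /andP [/andP [FS S0] SK].
    have [sK _] := (hF.1 S FS).
    apply: trdiv; first exact: stab_sub.
    exact: stab_proper.
  rewrite [X in trT (stab K K) K X]big1; last first.
    move=> g gR; have gK : g \in K := subsetP (hR K FK).1 g gR.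
    rewrite gK (proj1 (conj_ring A (erefl (cj 1%G g)))) (proj1 (res_ring A (subsetIr _ _))).
    exact: (nm_one A (subsetIl _ _)).
  rewrite stabK (tr_id A).
  rewrite [X in trT (stab K set0) K X](eq_bigr (fun g => nmT 1%G (stab K set0) m%:R)); last first.
    move=> g _; rewrite in_set0 (rh_nat _ (conj_ring A (erefl (cj 1%G g)))).
    by rewrite (rh_nat _ (res_ring A (subsetIr _ _))) (nm_nat_eq _ _ (meet_cj1 _ _)).
  have c1 : #|R set0| = 1%N.
    have := hR set0 F0; rewrite stab0; exact: dreps_card1.
  rewrite prodr_const c1 expr1 stab0 (tr_id A) IHm ez.
  exists (y + z); rewrite mulrSr mulrDr.
  by rewrite -!addrA; congr (_ + _); rewrite addrCA.
have [y ey] := step n.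
have nmv : nmT 1%G K n%:R * nmT 1%G K v = 1.
  by rewrite -(nm_mul A) ?sub1G // nv (nm_one A (sub1G K)).
exists ((1 + y) * nmT 1%G K v); by rewrite mulrA mulrDr mulr1 -ey nmv.
Qed.
End Main.

Theorem mainTheorem1 (gT : finGroupType) (T : tambara gT) (k : int) :
  [<-> is_unit (k%:~R : TT T [set: gT]%G);
       forall H : {group gT}, is_unit (k%:~R : TT T H);
       is_unit (k%:~R : TT T 1%G)].
Proof.
have A := taxioms T.
tfae.
- move=> hG H; have hr := res_ring A (subsetT H).
  by have := rh_unit hr hG; rewrite (rh_int _ hr).
- by move=> h; exact: h 1%G.
- move=> h1.
  have [n u1 back] : exists2 n : nat, is_unit (n%:R : TT T 1%G) &
      (is_unit (n%:R : TT T [set: gT]%G) -> is_unit (k%:~R : TT T [set: gT]%G)).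
    case: k h1 => n [y hy].
      by exists n; [exists y | ].
    exists n.+1.
      exists (- y); rewrite NegzE mulrNz in hy; by rewrite mulrN -mulNr.
    case=> w hw; exists (- w); by rewrite NegzE mulrNz mulNr -mulrN opprK.
  apply: back; apply: (main_nat u1 (ltnSn _)).
Qed.
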